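(* Let $\mathcal V$ be a congruence modular variety, $\mathbb A\in\mathcal V$, $n\ge 2$, $R$ an $(n)$-dimensional tolerance of $\mathbb A$ and $\delta\in\mathrm{Con}(\mathbb A)$. If $R$ has $(\delta,j)$-centrality for some $j\in n$, then $R$ has $(\delta,i)$-centrality for every $i\in n$.
   Context: Cube notation. $n=\{0,\dots,n-1\}$, $2=\{0,1\}$; $2^n$ is the set of functions $n\to2$, $\mathbf 1$ the constant function $1$. An $(n)$-cube over $A$ is $\gamma=(\gamma_f)_{f\in 2^n}\in A^{2^n}$. For $i\in n$, $j\in 2$, $\mathrm{face}_i^j(\gamma)$ is $g\mapsto\gamma_{g\cup\{(i,j)\}}$ ($g\in 2^{n\setminus\{i\}}$); $\mathrm{glue}_{\{i\}}(\zeta,\eta)$ is the unique cube with $\mathrm{face}_i^0=\zeta$, $\mathrm{face}_i^1=\eta$; $\mathrm{refl}_i^j(\gamma)=\mathrm{glue}_{\{i\}}(\mathrm{face}_i^j\gamma,\mathrm{face}_i^j\gamma)$ and $\mathrm{sym}_i(\gamma)=\mathrm{glue}_{\{i\}}(\mathrm{face}_i^1\gamma,\mathrm{face}_i^0\gamma)$. A subuniverse $R$ of $\mathbb A^{2^n}$ is an $(n)$-dimensional tolerance of $\mathbb A$ if $\mathrm{refl}_i^j(\gamma),\mathrm{sym}_i(\gamma)\in R$ for all $\gamma\in R$, $i\in n$, $j\in 2$. For $i\in n$ and $f\in 2^{n\setminus\{i\}}$ the $(i)$-cross-section line of $\gamma$ at $f$ is $(\gamma_{f\cup\{(i,0)\}},\gamma_{f\cup\{(i,1)\}})$;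 for $f=\mathbf 1$ it is the $(i)$-pivot line, for $f\neq \mathbf 1$ an $(i)$-supporting line. $R$ has $(\delta,i)$-centrality if for every $\gamma\in R$ all of whose $(i)$-supporting lines lie in $\delta$, the $(i)$-pivot line of $\gamma$ lies in $\delta$. *)

(* Defs.v *)
From mathcomp Require Import all_boot.
Set Implicit Arguments. Unset Strict Implicit. Unset Printing Implicit Defensive.

Record signature := Signature { sym :> Type; arity : sym -> nat }.

Record algebra (S : signature) := Algebra {
  carrier :> Type;
  op : forall f : S, ('I_(arity f) -> carrier) -> carrier }.
Arguments op {S a} f _.

Inductive term (S : signature) : Type :=
| Var of nat
| App (f : S) of ('I_(arity f) -> term S).

Fixpoint eval (S : signature) (B : algebra S) (v : nat -> B) (t : term S) : B :=
  match t with
  | Var x => v x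
  | App f a => @op S B f (fun k => eval v (a k))
  end.

Definition models (S : signature) (Sigma : term S -> term S -> Prop) (B : algebra S) : Prop :=
  forall s t, Sigma s t -> forall v : nat -> B, eval v s = eval v t.

Definition is_congruence (S : signature) (B : algebra S) (th : B -> B -> Prop) : Prop :=
  [/\ (forall x, th x x), (forall x y, th x y -> th y x),
      (forall x y z, th x y -> th y z -> th x z) &
      (forall (f : S) (a b : 'I_(arity f) -> B),
          (forall k, th (a k) (b k)) -> th (op f a) (op f b))].

Definition con_le (B : Type) (a b : B -> B -> Prop) := forall x y, a x y -> b x y.
Definition con_meet (B : Type) (a b : B -> B -> Prop) := fun x y => a x y /\ b x y.
Definition con_join (S : signature) (B : algebra S) (a b : B -> B -> Prop) :=
  fun x y => forall th, is_congruence th -> con_le a th -> con_le b th -> th x y.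

Definition con_modular (S : signature) (B : algebra S) : Prop :=
  forall a b c : B -> B -> Prop,
    is_congruence a -> is_congruence b -> is_congruence c -> con_le a c ->
    forall x y, con_join a (con_meet b c) x y <-> con_meet (con_join a b) c x y.

Definition cube (A : Type) (n : nat) := {ffun 'I_n -> bool} -> A.

(* f with coordinate i set to b, i.e. g \cup {(i,b)} for g the restriction of f. *)
Definition upd (n : nat) (f : {ffun 'I_n -> bool}) (i : 'I_n) (b : bool) : {ffun 'I_n -> bool} :=
  [ffun k => if k == i then b else f k].

Definition one_fn (n : nat) : {ffun 'I_n -> bool} := [ffun => true].

(* refl_i^j(gamma) = glue_i(face_i^j gamma, face_i^j gamma) *)
Definition refl (A : Type) (n : nat) (i : 'I_n) (j : bool) (g : cube A n) : cube A n :=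
  fun f => g (upd f i j).
(* sym_i(gamma) = glue_i(face_i^1 gamma, face_i^0 gamma) *)
Definition symc (A : Type) (n : nat) (i : 'I_n) (g : cube A n) : cube A n :=
  fun f => g (upd f i (~~ f i)).

Definition cube_subuniverse (S : signature) (A : algebra S) (n : nat) (R : cube A n -> Prop) :=
  forall (f : S) (args : 'I_(arity f) -> cube A n),
    (forall k, R (args k)) -> R (fun c => op f (fun k => args k c)).

Definition tolerance (S : signature) (A : algebra S) (n : nat) (R : cube A n -> Prop) : Prop :=
  cube_subuniverse R /\
  forall g, R g -> forall (i : 'I_n), (forall j : bool, R (refl i j g)) /\ R (symc i g).

(* (delta,i)-centrality. The cross-section at f in 2^(n\{i}) is encoded by any
   f in 2^n (its i-th value is irrelevant); f restricted to n\{i} differs from 1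
   iff f k = false for some k <> i. *)
Definition centrality (S : signature) (A : algebra S) (n : nat) (R : cube A n -> Prop)
    (delta : A -> A -> Prop) (i : 'I_n) : Prop :=
  forall g, R g ->
    (forall f : {ffun 'I_n -> bool}, (exists k, k != i /\ f k = false) ->
        delta (g (upd f i false)) (g (upd f i true))) ->
    delta (g (upd (one_fn n) i false)) (g (upd (one_fn n) i true)).

(* Main.v *)
Require Import Defs.
From mathcomp Require Import all_boot.
From Stdlib Require Import ClassicalEpsilon FunctionalExtensionality ProofIrrelevance PropExtensionality.
Set Implicit Arguments. Unset Strict Implicit. Unset Printing Implicit Defensive.

Section Free.
Variable S : signature.
Variable Sigma : term S -> term S -> Prop.

Fixpoint subst (sg : nat -> term S) (t : term S) : term S :=
  match t with
  | Var x => sg x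
  | App f a => App (fun k => subst sg (a k))
  end.

Lemma eval_subst (B : algebra S) (v : nat -> B) sg t :
  eval v (subst sg t) = eval (fun m => eval v (sg m)) t.
Proof.
elim: t => [m|f a IH] //=. congr (op f _). apply: functional_extensionality => k. exact: IH.
Qed.

Lemma eval_ext (B : algebra S) (v w : nat -> B) t : (forall m, v m = w m) -> eval v t = eval w t.
Proof. by move=> H; rewrite (functional_extensionality v w H). Qed.

Definition teq (s t : term S) := forall B : algebra S, models Sigma B ->
  forall w : nat -> B, eval w s = eval w t.

Lemma teq_refl t : teq t t. Proof. by []. Qed.
Lemma teq_sym s t : teq s t -> teq t s. Proof. by move=> H B HB w; rewrite H. Qed.
Lemma teq_trans s t u : teq s t -> teq t u -> teq s u.
Proof. by move=> H1 H2 B HB w; rewrite H1 // H2. Qed.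
Lemma teq_App f (a b : 'I_(arity f) -> term S) : (forall k, teq (a k) (b k)) -> teq (App a) (App b).
Proof.
move=> H B HB w /=; congr (op f _); apply: functional_extensionality => k; exact: H.
Qed.
Lemma teq_subst sg s t : teq s t -> teq (subst sg s) (subst sg t).
Proof. by move=> H B HB w; rewrite !eval_subst H. Qed.

Definition canon (t : term S) : term S := epsilon (inhabits t) (fun s => teq s t).
Lemma canon_teq t : teq (canon t) t.
Proof. rewrite /canon; apply: (epsilon_spec (inhabits t) (fun s => teq s t)); exists t; exact: teq_refl. Qed.
Lemma canon_eq s t : teq s t -> canon s = canon t.
Proof.
move=> H.
have E : (fun u => teq u s) = (fun u => teq u t).
  apply: functional_extensionality => u; apply: propositional_extensionality; split=> K.
  exact: teq_trans K H. exact: teq_trans K (teq_sym H).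
rewrite /canon E; congr (epsilon _ _); exact: proof_irrelevance.
Qed.
Lemma canon_idem t : canon (canon t) = canon t.
Proof. exact: canon_eq (canon_teq t). Qed.

Definition Fc := {t : term S | canon t = t}.
Definition Fmk (t : term S) : Fc := exist _ (canon t) (canon_idem t).
Definition Fop (f : S) (a : 'I_(arity f) -> Fc) : Fc := Fmk (App (fun k => proj1_sig (a k))).
Definition Falg : algebra S := {| carrier := Fc; op := Fop |}.

Lemma Fval_inj (s s' : Fc) : proj1_sig s = proj1_sig s' -> s = s'.
Proof.
case: s => s hs; case: s' => s' hs' /= E; subst s'; congr exist; exact: proof_irrelevance.
Qed.

Lemma eval_F (v : nat -> Falg) t :
  proj1_sig (eval v t) = canon (subst (fun m => proj1_sig (v m)) t).
Proof.
elim: t => [m|f a IH] /=.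
  by rewrite (proj2_sig (v m)).
apply: canon_eq; apply: teq_App => k; rewrite IH; exact: canon_teq.
Qed.

Lemma Falg_models : models Sigma Falg.
Proof.
move=> s t Hst v; apply: Fval_inj; rewrite !eval_F; apply: canon_eq => B HB w.
by rewrite !eval_subst; apply: HB.
Qed.

Definition kerF (sg : nat -> term S) (s s' : Falg) :=
  teq (subst sg (proj1_sig s)) (subst sg (proj1_sig s')).

Lemma kerF_cong sg : is_congruence (kerF sg).
Proof.
split.
- move=> x; exact: teq_refl.
- move=> x y; exact: teq_sym.
- move=> x y z; exact: teq_trans.
- move=> f a b H; rewrite /kerF /=.
  apply: teq_trans; first exact: teq_subst (canon_teq _).
  apply: teq_trans; last exact: teq_sym (teq_subst _ (canon_teq _)).
  by apply: teq_App => k; exact: H.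
Qed.

End Free.


Set Implicit Arguments. Unset Strict Implicit. Unset Printing Implicit Defensive.

Inductive clos (T : Type) (r1 r2 : T -> T -> Prop) : T -> T -> Prop :=
| cl1 x y : r1 x y -> clos r1 r2 x y
| cl2 x y : r2 x y -> clos r1 r2 x y
| clt x y z : clos r1 r2 x y -> clos r1 r2 y z -> clos r1 r2 x z.

Section Clos.
Variable S : signature.
Variable B : algebra S.
Variables r1 r2 : B -> B -> Prop.
Hypothesis H1 : is_congruence r1.
Hypothesis H2 : is_congruence r2.

Lemma clos_refl x : clos r1 r2 x x.
Proof. apply: cl1; case: H1 => h _ _ _; exact: h. Qed.

Lemma clos_sym x y : clos r1 r2 x y -> clos r1 r2 y x.
Proof.
elim=> {x y} [x y h|x y h|x y z _ IH1 _ IH2].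
- by apply: cl1; case: H1 => _ hs _ _; exact: hs.
- by apply: cl2; case: H2 => _ hs _ _; exact: hs.
- exact: clt IH2 IH1.
Qed.

Lemma clos_single f (c : 'I_(arity f) -> B) (k : 'I_(arity f)) x y :
  clos r1 r2 x y ->
  clos r1 r2 (op f (fun l => if l == k then x else c l)) (op f (fun l => if l == k then y else c l)).
Proof.
elim=> {x y} [x y h|x y h|x y z _ IH1 _ IH2].
- apply: cl1; case: H1 => hr _ _ hc; apply: hc => l; case: (l == k) => //.
- apply: cl2; case: H2 => hr _ _ hc; apply: hc => l; case: (l == k) => //.
- exact: clt IH1 IH2.
Qed.

Lemma clos_compat f (a b : 'I_(arity f) -> B) :
  (forall k, clos r1 r2 (a k) (b k)) -> clos r1 r2 (op f a) (op f b).
Proof.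
move=> H.
pose mix l := fun k : 'I_(arity f) => if (k < l)%N then b k else a k.
suff: forall l, (l <= arity f)%N -> clos r1 r2 (op f a) (op f (mix l)).
  move=> /(_ (arity f) (leqnn _)).
  have -> : mix (arity f) = b.
    by apply: functional_extensionality => k; rewrite /mix ltn_ord.
  done.
elim=> [|l IH] Hl.
  have -> : mix 0 = a by apply: functional_extensionality => k; rewrite /mix ltn0.
  exact: clos_refl.
have lt : (l < arity f)%N by [].
pose K := Ordinal lt.
apply: clt (IH (ltnW Hl)) _.
have E1 : mix l = (fun k => if k == K then a K else mix l k).
  apply: functional_extensionality => k; case: eqP => // ->.
  by rewrite /mix ltnn.
have E2 : mix l.+1 = (fun k => if k == K then b K else mix l k).
  apply: functional_extensionality => k; rewrite /mix; case: eqP => [->|ne].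
    by rewrite ltnSn.
  rewrite ltnS leq_eqVlt.
  have -> : (nat_of_ord k == l) = false.
    by apply/eqP => e; apply: ne; apply: val_inj.
  done.
rewrite E2 {1}E1; apply: clos_single; exact: H.
Qed.

Lemma clos_cong : is_congruence (clos r1 r2).
Proof.
split.
- exact: clos_refl.
- exact: clos_sym.
- move=> x y z; exact: clt.
- exact: clos_compat.
Qed.

Lemma join_clos x y : con_join r1 r2 x y -> clos r1 r2 x y.
Proof. move=> H; apply: H; [exact: clos_cong| move=> u v; exact: cl1| move=> u v; exact: cl2]. Qed.
End Clos.
Set Implicit Arguments. Unset Strict Implicit. Unset Printing Implicit Defensive.

Definition vec4 (T : Type) (a b c d : T) (m : nat) : T :=
  match m with 0 => a | 1 => b | 2 => c | _ => d end.

Section Day.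
Variable S : signature.
Variable Sigma : term S -> term S -> Prop.
Hypothesis HCM : forall B : algebra S, models Sigma B -> con_modular B.
Variable A : algebra S.
Hypothesis HA : models Sigma A.
Variable delta : A -> A -> Prop.
Hypothesis Hdelta : is_congruence delta.

Lemma d_refl x : delta x x. Proof. by case: Hdelta. Qed.
Lemma d_sym x y : delta x y -> delta y x. Proof. by case: Hdelta => _ h _ _; apply: h. Qed.
Lemma d_trans x y z : delta x y -> delta y z -> delta x z. Proof. by case: Hdelta => _ _ h _; apply: h. Qed.

Lemma eval_cong (v w : nat -> A) t : (forall m, delta (v m) (w m)) -> delta (eval v t) (eval w t).
Proof.
move=> H; elim: t => [m|f a IH] /=; first exact: H.
by case: Hdelta => _ _ _ hc; apply: hc.
Qed.

Lemma meet_cong (B : algebra S) (r1 r2 : B -> B -> Prop) :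
  is_congruence r1 -> is_congruence r2 -> is_congruence (con_meet r1 r2).
Proof.
case=> a1 b1 c1 d1 [a2 b2 c2 d2]; split.
- by move=> x; split.
- by move=> x y [h1 h2]; split; [apply: b1|apply: b2].
- by move=> x y z [h1 h2] [h3 h4]; split; [apply: c1 h3|apply: c2 h4].
- move=> f a b H; split; [apply: d1 => k; exact: (H k).1 | apply: d2 => k; exact: (H k).2].
Qed.

Lemma day_tsl (y1 x1 u1 v1 : A) : delta u1 x1 ->
  (forall t : term S, (forall a b : A, eval (vec4 a b b a) t = a) ->
     delta (eval (vec4 y1 x1 u1 v1) t) (eval (vec4 y1 y1 v1 v1) t)) ->
  delta y1 v1.
Proof.
move=> Hux Key.
pose F := Falg Sigma.
pose sa : nat -> term S := vec4 (Var S 0) (Var S 0) (Var S 3) (Var S 3).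
pose sb : nat -> term S := vec4 (Var S 0) (Var S 1) (Var S 1) (Var S 0).
pose sg : nat -> term S := vec4 (Var S 0) (Var S 1) (Var S 1) (Var S 3).
pose al := @kerF S Sigma sa. pose be := @kerF S Sigma sb. pose ga := @kerF S Sigma sg.
pose X := @Fmk S Sigma (Var S 0). pose Y := @Fmk S Sigma (Var S 1).
pose Z := @Fmk S Sigma (Var S 2). pose U := @Fmk S Sigma (Var S 3).
have kmk : forall s t sg', teq Sigma (subst sg' s) (subst sg' t) ->
    @kerF S Sigma sg' (Fmk Sigma s) (Fmk Sigma t).
  move=> s t sg' H; rewrite /kerF /=.
  apply: teq_trans; first exact: (teq_subst sg' (@canon_teq S Sigma s)).
  apply: teq_trans H _; exact: teq_sym (teq_subst sg' (@canon_teq S Sigma t)).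
have kid : forall sg' (s s' : F), @kerF S Sigma sg' s s' -> forall w : nat -> A,
    eval (fun m => eval w (sg' m)) (proj1_sig s) = eval (fun m => eval w (sg' m)) (proj1_sig s').
  by move=> sg' s s' H w; rewrite -!eval_subst; apply: H.
have valmk : forall t (w : nat -> A), eval w (proj1_sig (Fmk Sigma t)) = eval w t.
  move=> t w; exact: (@canon_teq S Sigma t A HA w).
have Hal := @kerF_cong S Sigma sa. have Hbe := @kerF_cong S Sigma sb.
have Hga := @kerF_cong S Sigma sg.
have gb : con_le ga be.
  move=> s s' H B HB w; rewrite !eval_subst.
  have := H B HB (fun m => eval w (sb m)); rewrite !eval_subst.
  have E : forall t, eval (fun m => eval (fun m0 => eval w (sb m0)) (sg m)) t
        = eval (fun m => eval w (sb m)) t by move=> t; apply: eval_ext; case=> [|[|[|m]]].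
  by rewrite !E.
have Hcl : clos ga (con_meet al be) X U.
  apply: join_clos; [exact: Hga| exact: meet_cong Hal Hbe|].
  apply/(HCM (@Falg_models S Sigma) Hga Hal Hbe gb); split.
  - move=> th Hth Hgt Hat.
    case: Hth => _ _ tr _.
    apply: (tr _ Y); first by apply: Hat; apply: kmk => B HB w.
    apply: (tr _ Z); first by apply: Hgt; apply: kmk => B HB w.
    by apply: Hat; apply: kmk => B HB w.
  - by apply: kmk => B HB w.
have clb : forall s s', clos ga (con_meet al be) s s' -> be s s'.
  move=> s s'; elim=> {s s'} [s s' h|s s' [_ h]|s s' s'' _ IH1 _ IH2] //.
  - exact: gb.
  - by case: Hbe => _ _ tr _; apply: tr IH1 IH2.
have idb : forall s : F, be s X -> forall a b : A, eval (vec4 a b b a) (proj1_sig s) = a.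
  move=> s Hs a b; have := kid _ _ _ Hs (vec4 a b b a).
  have E : forall t, eval (fun m => eval (vec4 a b b a) (sb m)) t = eval (vec4 a b b a) t.
    by move=> t; apply: eval_ext; case=> [|[|[|m]]].
  by rewrite !E valmk.
have idg : forall s s' : F, ga s s' -> forall a b c : A,
    eval (vec4 a b b c) (proj1_sig s) = eval (vec4 a b b c) (proj1_sig s').
  move=> s s' Hs a b c; have := kid _ _ _ Hs (vec4 a b b c).
  have E : forall t, eval (fun m => eval (vec4 a b b c) (sg m)) t = eval (vec4 a b b c) t.
    by move=> t; apply: eval_ext; case=> [|[|[|m]]].
  by rewrite !E.
have ida : forall s s' : F, al s s' -> forall a b : A,
    eval (vec4 a a b b) (proj1_sig s) = eval (vec4 a a b b) (proj1_sig s').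
  move=> s s' Hs a b; have := kid _ _ _ Hs (vec4 a a b b).
  have E : forall t, eval (fun m => eval (vec4 a a b b) (sa m)) t = eval (vec4 a a b b) t.
    by move=> t; apply: eval_ext; case=> [|[|[|m]]].
  by rewrite !E.
have beX : forall s, be s X -> forall s', clos ga (con_meet al be) s s' -> be s' X.
  move=> s Hs s' Hc; case: Hbe => _ sy tr _; apply: tr Hs; apply: sy; exact: clb.
pose e (s : F) := eval (vec4 y1 y1 v1 v1) (proj1_sig s).
have main : forall s s', clos ga (con_meet al be) s s' -> be s X -> delta (e s) (e s').
  move=> s s'; elim=> {s s'} [s s' h|s s' [h _]|s s' s'' H1 IH1 _ IH2] Hs.
  - have Hs' : be s' X by apply: (beX s Hs); apply: cl1.
    have K1 := Key _ (idb _ Hs). have K2 := Key _ (idb _ Hs').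
    have C : forall t, delta (eval (vec4 y1 x1 u1 v1) t) (eval (vec4 y1 x1 x1 v1) t).
      move=> t; apply: eval_cong; case=> [|[|[|m]]] /=; try exact: d_refl; exact: Hux.
    apply: d_trans (d_sym K1) _.
    apply: d_trans (C _) _.
    rewrite (idg _ _ h).
    apply: d_trans (d_sym (C _)) K2.
  - rewrite /e; rewrite (ida _ _ h); exact: d_refl.
  - apply: d_trans (IH1 Hs) (IH2 _); exact: beX Hs _ H1.
have := main _ _ Hcl.
rewrite /e !valmk /=; apply.
by case: Hbe.
Qed.
End Day.
Set Implicit Arguments. Unset Strict Implicit. Unset Printing Implicit Defensive.

Section Cubes.
Variable n : nat.
Implicit Types (p : {ffun 'I_n -> bool}) (i j : 'I_n).

Lemma upd_upd p i b c : upd (upd p i b) i c = upd p i c.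
Proof. by apply/ffunP => k; rewrite !ffunE; case: eqP. Qed.
Lemma upd_comm p i j b c : i != j -> upd (upd p i b) j c = upd (upd p j c) i b.
Proof.
move=> ne; apply/ffunP => k; rewrite !ffunE.
case: (eqVneq k j) => [kj|kj]; case: (eqVneq k i) => [ki|ki] //.
by move: ne; rewrite -kj -ki eqxx.
Qed.
Lemma upd_id p i b : p i = b -> upd p i b = p.
Proof. by move=> e; apply/ffunP => k; rewrite !ffunE; case: eqP => // ->. Qed.
Lemma upd_at p i b : upd p i b i = b.
Proof. by rewrite ffunE eqxx. Qed.
Lemma upd_ne p i k b : k != i -> upd p i b k = p k.
Proof. by move=> ne; rewrite ffunE (negbTE ne). Qed.
End Cubes.

Section Main.
Variable S : signature.
Variable Sigma : term S -> term S -> Prop.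
Hypothesis HCM : forall B : algebra S, models Sigma B -> con_modular B.
Variable A : algebra S.
Hypothesis HA : models Sigma A.
Variable n : nat.
Variable R : cube A n -> Prop.
Hypothesis HR : tolerance R.
Variable delta : A -> A -> Prop.
Hypothesis Hdelta : is_congruence delta.

Lemma R_eval (G : nat -> cube A n) : (forall m, R (G m)) ->
  forall t, R (fun f => eval (fun m => G m f) t).
Proof.
move=> HG; elim=> [m|f a IH] /=; first exact: HG.
exact: (HR.1 f _ IH).
Qed.

Lemma R_refl g i b : R g -> R (refl i b g).
Proof. by move=> Rg; case: (HR.2 g Rg i) => h _; apply: h. Qed.

Let dR := d_refl Hdelta.
Let dS := d_sym Hdelta.
Let dT := d_trans Hdelta.
Let eC := eval_cong Hdelta.

Lemma transfer (i j : 'I_n) : i != j -> centrality R delta i -> centrality R delta j.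
Proof.
move=> hij Ci g Rg Hj.
have hji : j != i by rewrite eq_sym.
pose x p := g (upd p i false).
pose y p := g (upd p i true).
pose u p := g (upd (upd p j false) i false).
pose v p := g (upd (upd p j false) i true).
have F1 : forall p : {ffun 'I_n -> bool}, p j = true -> delta (u p) (x p).
  move=> p pj; have := Hj (upd p i false).
  have E1 : upd (upd p i false) j false = upd (upd p j false) i false by rewrite upd_comm.
  have E2 : upd (upd p i false) j true = upd p i false by apply: upd_id; rewrite upd_ne.
  rewrite E1 E2; apply; exists i; by rewrite hij upd_at.
have F2 : forall (p : {ffun 'I_n -> bool}) k, p j = true -> k != i -> p k = false -> delta (v p) (y p).
  move=> p k pj ki pk; have := Hj (upd p i true).
  have E1 : upd (upd p i true) j false = upd (upd p j false) i true by rewrite upd_comm.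
  have E2 : upd (upd p i true) j true = upd p i true by apply: upd_id; rewrite upd_ne.
  rewrite E1 E2; apply; exists k; rewrite upd_ne //; split => //.
  by apply/eqP => e; move: pk; rewrite e pj.
have F3 : forall p : {ffun 'I_n -> bool}, p j = false -> x p = u p /\ y p = v p.
  by move=> p pj; rewrite /u /v (upd_id pj).
pose one := one_fn n.
have onej : one j = true by rewrite ffunE.
suff : delta (y one) (v one).
  have e1 : upd one i true = one by apply: upd_id; rewrite ffunE.
  have e2 : upd (upd one j false) i true = upd one j false by apply: upd_id; rewrite upd_ne // ffunE.
  have e3 : upd one j true = one by apply: upd_id; rewrite ffunE.
  by rewrite /y /v e1 e2 e3 => h; exact: dS h.
apply: (day_tsl HCM HA Hdelta (x1 := x one) (u1 := u one) (F1 one onej)).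
move=> t Ht.
pose G1 := refl i true g. pose G2 := g. pose G3 := refl j false g.
pose G4 := refl i true (refl j false g).
pose H f := eval (fun m => vec4 G1 G2 G3 G4 m f) t.
have RH : R H.
  apply: R_eval; case=> [|[|[|m]]] /=.
  - exact: R_refl.
  - exact: Rg.
  - exact: R_refl.
  - by apply: R_refl; apply: R_refl.
have H0 : forall p : {ffun 'I_n -> bool}, H (upd p i false) = eval (vec4 (y p) (x p) (u p) (v p)) t.
  move=> p; apply: eval_ext; case=> [|[|[|m]]] /=; rewrite /G1 /G3 /G4 /refl /y /x /u /v.
  - by rewrite upd_upd.
  - by [].
  - by rewrite upd_comm.
  - by rewrite upd_upd upd_comm.
have H1 : forall p : {ffun 'I_n -> bool}, H (upd p i true) = eval (vec4 (y p) (y p) (v p) (v p)) t.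
  move=> p; apply: eval_ext; case=> [|[|[|m]]] /=; rewrite /G1 /G3 /G4 /refl /y /x /u /v.
  - by rewrite upd_upd.
  - by [].
  - by rewrite upd_comm.
  - by rewrite upd_upd upd_comm.
have Hy : forall a : A, eval (vec4 a a a a) t = a by move=> a; exact: Ht.
have := Ci H RH.
rewrite H0 H1; apply.
move=> f [k [ki fk]].
rewrite H0 H1.
case fj: (f j).
- have kj : k != j by apply/eqP => e; move: fk; rewrite e fj.
  apply: (dT (y:=y f)).
  + rewrite -{2}(Ht (y f) (x f)).
    apply: eC; case=> [|[|[|m]]] /=; try exact: dR.
    * exact: F1.
    * exact: (F2 f k).
  + rewrite -{1}(Hy (y f)).
    apply: eC; case=> [|[|[|m]]] /=; try exact: dR.
    * exact: dS (F2 f k fj ki fk).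
    * exact: dS (F2 f k fj ki fk).
- case: (F3 f fj) => -> ->.
  rewrite Ht Hy; exact: dR.
Qed.
End Main.

Theorem proposition2p3 (S : signature) (Sigma : term S -> term S -> Prop)
  (HCM : forall B : algebra S, models Sigma B -> con_modular B)
  (A : algebra S) (HA : models Sigma A)
  (n : nat) (Hn : 2 <= n) (R : cube A n -> Prop) (HR : tolerance R)
  (delta : A -> A -> Prop) (Hdelta : is_congruence delta) :
  (exists j : 'I_n, centrality R delta j) -> forall i : 'I_n, centrality R delta i.
Proof.
move=> [j Cj] i.
case: (eqVneq j i) => [<-|ne] //.
exact: (transfer HCM HA HR Hdelta ne Cj).
Qed.
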